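(* Let $\ell\ge2$ and $k\ge1$ be integers. Let $\Upsilon_\ell^k$ be the map sending a partition $\nu=(\nu_1,\ldots,\nu_k)$ with $k$ nonzero parts to the partition $(\nu_1-1,\ldots,\nu_k-1)$ (zero parts discarded), i.e. deleting the first column of the diagram. Then $\Upsilon_\ell^k$ is a bijection from $\{\nu:\nu_1\le\ell-1,\ len(\nu)=k\}$ onto $\{\sigma:\sigma_1\le\ell-2,\ len(\sigma)\le k\}$, and for every $\ell$-core $\lambda$ with $len(\lambda)=k$, \[ \rho_{\ell-1}\big(\widetilde{\Phi_\ell^k}(\lambda)\big)=\Upsilon_\ell^k\big(\rho_\ell(\lambda)\big). \]
   Context: Partitions are in English notation; box $(x,y)$ is in row $x$, column $y$; $len(\mu)$ is the number of nonzero parts. The hook length $h^\mu_{(a,c)}$ of a box is the number of boxes of $\mu$ in row $a$ weakly right of it plus the number in column $c$ strictly below it. An $m$-core is a partition none of whose hook lengths is divisible by $m$. Lapointe–Morse map: for $m\ge1$ and an $m$-core $\mu$, $\rho_m(\mu)$ is the partition whose $x$-th part is the number of boxes in row $x$ of $\mu$ having hook length $\le m$ (i.e. left-justify the rows of the skew diagram $\mu/\gamma$, where $\gamma$ consists of the boxes of $\mu$ with hook length $>m$). It is known that $\rho_m$ is a bijection from $m$-cores onto partitions with first part $\le m-1$, preserving the number of nonzero parts. For an $\ell$-core $\lambda$ with $len(\lambda)=k$, $\widetilde{\Phi_\ell^k}(\lambda)$ is obtained from the diagram of $\lambda$ by deleting every column $y$ with $h^\lambda_{(1,y)}\equiv h^\lambda_{(1,1)}\pmod\ell$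 and shifting the remaining columns left; equivalently it is the transpose of $\Phi_\ell^k(\lambda^{tr})$, where for an $\ell$-core $\nu$ with first part $k$, $\Phi_\ell^k(\nu)$ deletes all rows $x$ with $h^\nu_{(x,1)}\equiv h^\nu_{(1,1)}\pmod\ell$. It is known that $\widetilde{\Phi_\ell^k}(\lambda)$ is an $(\ell-1)$-core with at most $k$ nonzero parts. *)

(* Defs.v *)
From mathcomp Require Import all_boot.
Set Implicit Arguments. Unset Strict Implicit. Unset Printing Implicit Defensive.

(* A partition is a weakly decreasing list of POSITIVE parts (zero parts are
   discarded), so len(mu) = size mu.  Rows and columns are 1-indexed. *)
Definition is_partition (p : seq nat) : bool :=
  sorted geq p && all (fun x => 0 < x) p.

Definition part (p : seq nat) (x : nat) : nat := nth 0 p x.-1.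

Definition col_len (p : seq nat) (c : nat) : nat := count (fun r => c <= r) p.

(* hook length of box (a,c): boxes in row a weakly right of it plus
   boxes in column c strictly below it *)
Definition hook (p : seq nat) (a c : nat) : nat :=
  (part p a - c).+1 + (col_len p c - a).

Definition is_core (m : nat) (p : seq nat) : bool :=
  is_partition p &&
  all (fun a => all (fun c => ~~ (m %| hook p a c)) (iota 1 (part p a)))
      (iota 1 (size p)).

Definition rho (m : nat) (p : seq nat) : seq nat :=
  filter (fun x => 0 < x)
    [seq count (fun c => hook p a c <= m) (iota 1 (part p a)) | a <- iota 1 (size p)].

(* widetilde{Phi_l^k}: delete every column y with h_(1,y) = h_(1,1) mod l,
   shift remaining columns left (zero parts discarded) *)
Definition phi_tilde (l : nat) (p : seq nat) : seq nat :=
  let kept y := hook p 1 y != hook p 1 1 %[mod l] in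
  filter (fun x => 0 < x)
    [seq count kept (iota 1 r) | r <- p].

Definition upsilon (p : seq nat) : seq nat :=
  filter (fun x => 0 < x) [seq x.-1 | x <- p].

(* Main.v *)
Require Import Defs.
From mathcomp Require Import all_boot zify.
Set Implicit Arguments. Unset Strict Implicit.

Lemma geq_trans' : transitive geq.
Proof. by move=> a b c h1 h2; apply: leq_trans h2 h1. Qed.

Lemma nth_le_head (p : seq nat) i : sorted geq p -> nth 0 p i <= head 0 p.
Proof.
case: p => [|x s] //=; first by rewrite nth_nil.
move=> Hs; have := order_path_min geq_trans' Hs => /allP Ha.
case: i => //= i; case: (ltnP i (size s)) => Hi.
  exact: Ha (mem_nth 0 Hi).
by rewrite nth_default.
Qed.

Lemma colP p a c : sorted geq p -> 0 < a -> 0 < c ->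
  (a <= col_len p c) = (c <= part p a).
Proof.
elim: p a => [|x s IH] a Hs Ha Hc.
  by rewrite /col_len /part nth_nil /=; lia.
rewrite /col_len /part /=.
have Hs' : sorted geq s by move: Hs => /= /path_sorted.
case: (leqP c x) => Hcx.
  case: a Ha => // [[|a]] _ /=; first by rewrite Hcx.
  rewrite add1n ltnS; exact: (IH a.+1).
have Hall := order_path_min geq_trans' Hs.
have -> : count (fun r => c <= r) s = 0.
  apply/eqP; rewrite -leqn0 leqNgt -has_count; apply/hasPn => y Hy.
  move/allP: Hall => /(_ y Hy) /= Hyx; rewrite -ltnNge; exact: leq_ltn_trans Hyx Hcx.
have := nth_le_head a.-1 Hs => /= Hn.
apply/idP/idP => H; first by lia.
have : c <= x := leq_trans H Hn. by rewrite leqNgt Hcx.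
Qed.

Definition Hh (p : seq nat) a := part p a + size p - a.
Definition gg (p : seq nat) c := size p + c.-1 - col_len p c.

Lemma col_le p c : col_len p c <= size p.
Proof. exact: count_size. Qed.

Lemma col1 p : is_partition p -> col_len p 1 = size p.
Proof.
case/andP=> _ Ha; rewrite /col_len -(count_predT p); apply: eq_in_count => x Hx.
by move/allP: Ha => /(_ x Hx).
Qed.

Lemma gg1 p : is_partition p -> gg p 1 = 0.
Proof. by move=> Hp; rewrite /gg col1 // addn0 subnn. Qed.

Lemma col_anti p c : col_len p c.+1 <= col_len p c.
Proof. apply: sub_count => x /= H; exact: ltnW. Qed.

Lemma gg_lt p c : 0 < c -> gg p c < gg p c.+1.
Proof. move=> Hc; rewrite /gg; have := col_le p c; have := col_anti p c; lia. Qed.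

Lemma gg_mono p c1 c2 : 0 < c1 -> c1 < c2 -> gg p c1 < gg p c2.
Proof.
move=> H1; elim: c2 => // c2 IH; rewrite ltnS leq_eqVlt => /orP[/eqP<-|H].
  exact: gg_lt.
apply: ltn_trans (IH H) (gg_lt _ _); lia.
Qed.

Lemma gg_inj p c1 c2 : 0 < c1 -> 0 < c2 -> gg p c1 = gg p c2 -> c1 = c2.
Proof.
move=> H1 H2 E; case: (ltngtP c1 c2) => // H.
  by have := gg_mono p H1 H; rewrite E ltnn.
by have := gg_mono p H2 H; rewrite E ltnn.
Qed.

Lemma hookE p a c : sorted geq p -> 0 < a -> 0 < c -> c <= part p a ->
  hook p a c + gg p c = Hh p a.
Proof.
move=> Hs Ha Hc Hca; have := colP Hs Ha Hc; rewrite Hca => Hac.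
rewrite /hook /gg /Hh; have := col_le p c; lia.
Qed.

Lemma gg_big p b c : sorted geq p -> 0 < b -> b <= size p -> 0 < c ->
  part p b < c -> Hh p b < gg p c.
Proof.
move=> Hs Hb Hbs Hc Hbc; have := colP Hs Hb Hc; rewrite [c <= _]leqNgt Hbc /= => /negbT.
rewrite -ltnNge => H; rewrite /Hh /gg; have := col_le p c; lia.
Qed.

Lemma gap p b N : is_partition p -> 0 < b -> b <= size p -> N < Hh p b ->
  (exists a, [/\ 0 < a, a <= size p & Hh p a = N]) \/
  (exists c, [/\ 0 < c, c <= part p b & gg p c = N]).
Proof.
move=> Hp Hb Hbs HN; have Hs : sorted geq p by case/andP: Hp.
have exP : exists c, (0 < c) && (N <= gg p c).
  exists N.+1; rewrite /= /gg; have := col_le p N.+1; lia.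
case: (ex_minnP exP) => c /andP[Hc0 HcN] Hmin.
have Hcb : ~~ (part p b < c) -> c <= part p b by rewrite -leqNgt.
case: (ltngtP N (gg p c)) HcN => // HNc _; last first.
  right; exists c; split => //; apply: Hcb; apply/negP => H.
  by have := gg_big Hs Hb Hbs Hc0 H; lia.
have Hc1 : 1 < c.
  case: c Hc0 HNc {Hmin Hcb} => // [[|c]] //; by rewrite gg1.
have Hprev : gg p c.-1 < N.
  rewrite ltnNge; apply/negP => H.
  have := Hmin c.-1; rewrite H andbT; lia.
left; exists (c.-1 + size p - N).
have Ha0 : 0 < c.-1 + size p - N by move: HNc; rewrite /gg; lia.
have Hc1' : 0 < c.-1 by lia.
have L1 := colP Hs Ha0 Hc1'.
have L2 := colP Hs Ha0 Hc0.
have Hcm : c.-1 + size p - N <= col_len p c.-1.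
  move: Hprev; rewrite /gg; have := col_le p c.-1; lia.
have Hcn : ~~ (c.-1 + size p - N <= col_len p c).
  move: HNc; rewrite /gg; have := col_le p c; lia.
have Hsz : c.-1 + size p - N <= size p by have := col_le p c.-1; lia.
rewrite L1 in Hcm.
rewrite L2 -ltnNge in Hcn.
split => //.
rewrite /Hh; lia.
Qed.

Lemma part_pos p a : is_partition p -> 0 < a -> a <= size p -> 0 < part p a.
Proof.
case/andP=> _ /allP H Ha Has; apply: H; rewrite /part; apply: mem_nth; by case: a Ha Has.
Qed.

Lemma core_hook l p a c : is_core l p -> 0 < a -> a <= size p -> 0 < c ->
  c <= part p a -> ~~ (l %| hook p a c).
Proof.
case/andP=> _ /allP H Ha Has Hc Hca.
have Hai : a \in iota 1 (size p) by rewrite mem_iota; lia.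
move/allP: (H a Hai) => H2.
apply: H2; rewrite mem_iota; lia.
Qed.

Lemma nomult l p a : 0 < l -> is_core l p -> 0 < a -> a <= size p -> ~~ (l %| Hh p a).
Proof.
move=> Hl Hc; have Hp : is_partition p by case/andP: Hc.
have Hs : sorted geq p by case/andP: Hp.
move: {2}(Hh p a) (leqnn (Hh p a)) => n; elim: n a => [|n IH] a Hle Ha Has.
  have := part_pos Hp Ha Has; move: Hle; rewrite /Hh; lia.
apply/negP => Hd.
have Hpos : 0 < Hh p a by have := part_pos Hp Ha Has; rewrite /Hh; lia.
have Hlh : l <= Hh p a by apply: dvdn_leq.
have HN : Hh p a - l < Hh p a by lia.
case: (gap Hp Ha Has HN) => [[a' [Ha' Has' E]] | [c [Hc0 Hca E]]].
  have := IH a' (ltac:(lia)) Ha' Has'; rewrite E dvdn_sub //.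
have := core_hook Hc Ha Has Hc0 Hca; have := hookE Hs Ha Hc0 Hca.
rewrite E => Eh; have -> : hook p a c = l by lia.
by rewrite dvdnn.
Qed.

Definition kept l p y := hook p 1 y != hook p 1 1 %[mod l].

Lemma part_le1 p a : sorted geq p -> part p a <= part p 1.
Proof. move=> Hs; rewrite /part /= nth0; exact: nth_le_head. Qed.

Lemma keptE l p y : is_partition p -> 0 < size p -> 0 < y -> y <= part p 1 ->
  kept l p y = ~~ (l %| gg p y).
Proof.
move=> Hp Hk Hy Hy1; have Hs : sorted geq p by case/andP: Hp.
have E1 := hookE Hs (isT : 0 < 1) Hy Hy1.
have Hp1 := part_pos Hp (isT : 0 < 1) Hk.
have E2 := hookE Hs (isT : 0 < 1) (isT : 0 < 1) Hp1.
rewrite gg1 // addn0 in E2.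
rewrite /kept E2 -E1 -{1}(addn0 (hook p 1 y)) eqn_modDl mod0n /dvdn eq_sym.
done.
Qed.

Lemma factB l p a : 2 <= l -> is_core l p -> 0 < a -> a <= size p ->
  count (fun c => (hook p a c <= l) && ~~ kept l p c) (iota 1 (part p a)) = 1.
Proof.
move=> Hl Hc Ha Has; have Hp : is_partition p by case/andP: Hc.
have Hs : sorted geq p by case/andP: Hp.
have Hk : 0 < size p by lia.
have Hnm := nomult (ltac:(lia) : 0 < l) Hc Ha Has.
set H := Hh p a in Hnm *.
have Hmod : 0 < H %% l by rewrite lt0n.
have Hdiv := divn_eq H l.
have Hlt : H %% l < l by rewrite ltn_mod; lia.
have HM : H %/ l * l < H by lia.
case: (gap Hp Ha Has HM) => [[a' [Ha' Has' E]] | [c0 [Hc0 Hca E]]].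
  by have := nomult (ltac:(lia) : 0 < l) Hc Ha' Has'; rewrite E dvdn_mull.
have E0 := hookE Hs Ha Hc0 Hca.
rewrite -(eq_in_count (a1 := pred1 c0)).
  by rewrite count_uniq_mem ?iota_uniq // mem_iota; lia.
move=> c; rewrite mem_iota => /andP[Hc1 Hc2].
have Hca' : c <= part p a by lia.
have Hc1' : c <= part p 1 by apply: leq_trans Hca' (part_le1 _ Hs).
rewrite /= keptE // negbK.
apply/eqP/andP => [->|[Hh Hd]].
  split; last by rewrite E dvdn_mull.
  rewrite -/H in E0; lia.
have Ec := hookE Hs Ha Hc1 Hca'.
rewrite -/H in Ec E0.
have Hnl : hook p a c != l.
  apply/eqP => El; have := core_hook Hc Ha Has Hc1 Hca'; by rewrite El dvdnn.
have Hhl : hook p a c < l by rewrite ltn_neqAle Hnl Hh.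
have Hh0 : 0 < hook p a c by rewrite /hook.
case/dvdnP: Hd => u Hu.
apply: (gg_inj (p:=p)) => //; rewrite E Hu.
clearbody H. have h1 : H < u * l + l by rewrite -Hu; lia.
have h2 : u * l < H by rewrite -Hu; lia.
move: Hdiv; set v := H %/ l; set r := H %% l => Hdiv.
move: Hlt Hmod; rewrite -/r => Hlt Hmod.
suff -> : u = v by [].
apply/eqP; rewrite eqn_leq; apply/andP; split; rewrite leqNgt; apply/negP => Hw.
  have : v.+1 * l <= u * l by rewrite leq_pmul2r //; lia.
  rewrite mulSn; lia.
have : u.+1 * l <= v * l by rewrite leq_pmul2r //; lia.
rewrite mulSn; lia.
Qed.

Definition Kn l p e := count (fun y => ~~ kept l p y) (iota 1 e).

Lemma iota1S e : iota 1 e.+1 = iota 1 e ++ [:: e.+1].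
Proof. have := iotaD 1 e 1. rewrite addn1 add1n. done. Qed.

Lemma Kn_bound l p c e : 0 < l -> is_partition p -> 0 < size p -> 0 < c ->
  c <= e -> e <= part p 1 -> Kn l p e + gg p c %/ l <= Kn l p c + gg p e %/ l.
Proof.
move=> Hl Hp Hk Hc; elim: e => [|e IH] Hce He1; first lia.
case: (ltngtP c e.+1) Hce => // [Hlt _|-> _]; last by [].
have IH' := IH (ltac:(lia)) (ltac:(lia)).
have -> : Kn l p e.+1 = Kn l p e + ~~ kept l p e.+1.
  by rewrite /Kn iota1S count_cat /= addn0.
rewrite keptE // negbK.
have Hgl := gg_lt p (ltac:(lia) : 0 < e).
case Hd: (l %| gg p e.+1).
  move/dvdnP: Hd => [m Hm]; rewrite Hm mulnK //.
  have : gg p e %/ l < m by rewrite ltn_divLR // -Hm.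
  move: IH'; lia.
have : gg p e %/ l <= gg p e.+1 %/ l by apply: leq_div2r; lia.
lia.
Qed.

Lemma factC l p a c : 2 <= l -> is_core l p -> 0 < a -> a <= size p ->
  0 < c -> c <= part p a -> l < hook p a c ->
  l <= hook p a c - (Kn l p (part p a) - Kn l p c).
Proof.
move=> Hl Hc Ha Has Hc0 Hca Hlh; have Hp : is_partition p by case/andP: Hc.
have Hs : sorted geq p by case/andP: Hp.
have Hk : 0 < size p by lia.
have Hpa := part_pos Hp Ha Has.
have B := Kn_bound (ltac:(lia) : 0 < l) Hp Hk Hc0 Hca (part_le1 a Hs).
have E1 := hookE Hs Ha Hc0 Hca.
have E2 := hookE Hs Ha Hpa (leqnn _).
have Hh2 : 0 < hook p a (part p a) by rewrite /hook.
have Hg : gg p (part p a) %/ l <= (Hh p a).-1 %/ l by apply: leq_div2r; lia.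
move: E1 E2 Hh2 Hg B Hlh.
move: (hook p a c) (hook p a (part p a)) (Kn l p (part p a)) (Kn l p c) => h1 h2 K1 K2.
move: (Hh p a) (gg p c) (gg p (part p a)) => H g1 g2 E1 E2 Hh2 Hg B Hlh.
have D1 := divn_eq H.-1 l; have D2 := divn_eq g1 l.
have R1 : H.-1 %% l < l by rewrite ltn_mod; lia.
have R2 : g1 %% l < l by rewrite ltn_mod; lia.
move: D1 D2 R1 R2 Hg B.
move: (H.-1 %/ l) (H.-1 %% l) (g1 %/ l) (g1 %% l) => q1 r1 q2 r2 D1 D2 R1 R2 Hg B.
have Hq : q2 <= q1.
  rewrite leqNgt; apply/negP => Hw.
  have : q1.+1 * l <= q2 * l by rewrite leq_pmul2r //; lia.
  rewrite mulSn; lia.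
have HH : (H.-1).+1 = H by rewrite prednK //; lia.
move: D1 Hg B HH; rewrite -(subnKC Hq); move: (q1 - q2) => t.
case: t => [|[|t]] D1 Hg B HH.
- rewrite addn0 in D1; lia.
- rewrite addn1 mulSn in D1; lia.
- rewrite -addn2 !mulnDl in D1.
  have : t <= t * l by apply: leq_pmulr; lia.
  lia.
Qed.

Definition KK l p e := count (kept l p) (iota 1 e).

Lemma countS (P : pred nat) n : count P (iota 1 n.+1) = count P (iota 1 n) + P n.+1.
Proof. by rewrite iota1S count_cat /= addn0. Qed.

Lemma reindex (Q P : pred nat) n :
  count P (iota 1 (count Q (iota 1 n))) =
  count (fun c => Q c && P (count Q (iota 1 c))) (iota 1 n).
Proof.
elim: n => // n IH.
rewrite [in RHS]countS -IH countS.
move: (count Q (iota 1 n)) => m.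
case: (Q n.+1) => /=; last by rewrite !addn0.
by rewrite addn1 countS.
Qed.

Lemma count_split (T : Type) (P Q : pred T) s :
  count P s = count (fun x => P x && Q x) s + count (fun x => P x && ~~ Q x) s.
Proof. elim: s => //= x s ->; case: (P x); case: (Q x) => /=; lia. Qed.

Lemma count_iota_mono (P : pred nat) c e : c <= e ->
  count P (iota 1 c) <= count P (iota 1 e).
Proof.
move=> H; rewrite -(subnKC H) iotaD count_cat; exact: leq_addr.
Qed.

Lemma KKn l p e : KK l p e + Kn l p e = e.
Proof. by rewrite /KK /Kn count_predC size_iota. Qed.

Lemma KK_strict l p r c : kept l p c -> r < c -> KK l p r < KK l p c.
Proof.
move=> Hk Hrc; case: c Hk Hrc => // c Hk Hrc.
rewrite /KK iota1S count_cat /= Hk addn1 ltnS; apply: count_iota_mono; lia.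
Qed.

Lemma colq l p c : kept l p c ->
  col_len [seq KK l p r | r <- p] (KK l p c) = col_len p c.
Proof.
move=> Hk; rewrite /col_len count_map; apply: eq_count => r /=.
case: (leqP c r) => H.
  by apply/idP; apply: count_iota_mono.
by apply/negbTE; rewrite -ltnNge; apply: KK_strict.
Qed.

Lemma partq l p a : 0 < a -> a <= size p ->
  part [seq KK l p r | r <- p] a = KK l p (part p a).
Proof. move=> Ha Has; rewrite /part (nth_map 0) //; by case: a Ha Has. Qed.

Lemma rowlemma l p a : 2 <= l -> is_core l p -> 0 < a -> a <= size p ->
  count (fun c => hook [seq KK l p r | r <- p] a c <= l - 1)
        (iota 1 (part [seq KK l p r | r <- p] a)) =
  (count (fun c => hook p a c <= l) (iota 1 (part p a))).-1.
Proof.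
move=> Hl Hc Ha Has; have Hp : is_partition p by case/andP: Hc.
have Hs : sorted geq p by case/andP: Hp.
rewrite partq // /KK reindex -/(KK l p _).
rewrite [in RHS](count_split _ (kept l p)) factB // addn1 /=.
apply: eq_in_count => c; rewrite mem_iota => /andP[Hc0 Hc1].
have Hca : c <= part p a by lia.
rewrite andbC; case Hk: (kept l p c); rewrite ?andbF ?andbT //.
have E1 := KKn l p (part p a); have E2 := KKn l p c.
have M1 := count_iota_mono (kept l p) Hca.
have M2 := count_iota_mono (fun y => ~~ kept l p y) Hca.
rewrite -/(KK l p c) -/(KK l p (part p a)) -/(Kn l p c) -/(Kn l p (part p a)) in M1 M2.
have -> : hook [seq KK l p r | r <- p] a (KK l p c) =
          hook p a c - (Kn l p (part p a) - Kn l p c).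
  rewrite /hook partq // colq //; lia.
case: (ltnP l (hook p a c)) => Hlh.
  apply/negbTE; rewrite -ltnNge; have := factC Hl Hc Ha Has Hc0 Hca Hlh; lia.
have Hnl : hook p a c != l.
  apply/eqP => El; have := core_hook Hc Ha Has Hc0 Hca; by rewrite El dvdnn.
have : hook p a c < l by rewrite ltn_neqAle Hnl Hlh.
lia.
Qed.

Definition pos (x : nat) := 0 < x.

Lemma nth_filter_pos s i : sorted geq s -> nth 0 (filter pos s) i = nth 0 s i.
Proof.
elim: s i => [|x s IH] i Hs /=; first by rewrite nth_nil.
have Hs' : sorted geq s by move: Hs => /= /path_sorted.
case: x Hs => [|x] Hs /=.
  have Hall := order_path_min geq_trans' Hs.
  have Hz : forall y, y \in s -> y = 0.
    by move=> y Hy; move/allP: Hall => /(_ y Hy) /=; rewrite leqn0 => /eqP.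
  have -> : filter pos s = [::].
    apply/eqP; rewrite -size_eq0 size_filter -leqn0 leqNgt -has_count.
    by apply/hasPn => y Hy; rewrite /pos (Hz y Hy).
  rewrite nth_nil; case: i => // i /=.
  case: (ltnP i (size s)) => Hi; last by rewrite nth_default.
  by rewrite (Hz _ (mem_nth 0 Hi)).
rewrite /pos /=; case: i => //= i; exact: IH.
Qed.

Lemma col_filter s c : 0 < c -> col_len (filter pos s) c = col_len s c.
Proof.
move=> Hc; rewrite /col_len count_filter; apply: eq_count => r /=.
rewrite /pos; case: (leqP c r) => H //=; lia.
Qed.

Lemma hook_filter s a c : sorted geq s -> 0 < c ->
  hook (filter pos s) a c = hook s a c.
Proof. by move=> Hs Hc; rewrite /hook /part nth_filter_pos // col_filter. Qed.

Lemma filter_ext (f : nat -> nat) n N : n <= N -> (forall a, n < a -> f a = 0) ->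
  filter pos (map f (iota 1 n)) = filter pos (map f (iota 1 N)).
Proof.
move=> HN Hf; rewrite -(subnKC HN) iotaD map_cat filter_cat.
have -> : filter pos (map f (iota (1 + n) (N - n))) = [::].
  apply/eqP; rewrite -size_eq0 size_filter -leqn0 leqNgt -has_count.
  apply/hasPn => y /mapP [a Ha ->]; rewrite /pos Hf //.
  by move: Ha; rewrite mem_iota; lia.
by rewrite cats0.
Qed.

Lemma filter_pred s : filter pos (map predn (filter pos s)) = filter pos (map predn s).
Proof. elim: s => // x s IH; case: x => [|[|x]]; rewrite /= /pos /= -/pos ?IH //. Qed.

Lemma sorted_KK l p : sorted geq p -> sorted geq [seq KK l p r | r <- p].
Proof.
move=> Hs; apply: (homo_sorted _ _ Hs) => x y /= H; exact: count_iota_mono.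
Qed.

Lemma part2 l lam : 2 <= l -> is_core l lam ->
  rho (l - 1) (phi_tilde l lam) = upsilon (rho l lam).
Proof.
move=> Hl Hc; have Hp : is_partition lam by case/andP: Hc.
have Hs : sorted geq lam by case/andP: Hp.
set q' := [seq KK l lam r | r <- lam].
have Hq's : sorted geq q' by apply: sorted_KK.
change (phi_tilde l lam) with (filter pos q').
rewrite /rho /upsilon.
set f := fun s a => count (fun c => hook s a c <= l - 1) (iota 1 (part s a)).
have -> : [seq count (fun c => hook (filter pos q') a c <= l - 1)
                 (iota 1 (part (filter pos q') a)) | a <- iota 1 (size (filter pos q'))]
        = [seq f q' a | a <- iota 1 (size (filter pos q'))].
  apply: eq_map => a; rewrite /f /part nth_filter_pos //.
  apply: eq_in_count => c; rewrite mem_iota => /andP[Hc0 _].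
  by rewrite hook_filter.
rewrite (@filter_ext (f q') _ (size lam)); first last.
- move=> a Ha; rewrite /f.
  have -> : part q' a = 0.
    rewrite /part -nth_filter_pos // nth_default //; lia.
  by [].
- by rewrite size_filter (leq_trans (count_size _ _)) // size_map.
rewrite -/pos filter_pred -map_comp.
congr (filter _ _); apply/eq_in_map => a; rewrite mem_iota => /andP[Ha Has].
rewrite /= /f rowlemma //; lia.
Qed.

Lemma mem_le_head s y : sorted geq s -> y \in s -> y <= head 0 s.
Proof. move=> Hs Hy; rewrite -(nth_index 0 Hy); exact: nth_le_head. Qed.

Lemma head_le s B : (forall x, x \in s -> x <= B) -> head 0 s <= B.
Proof. case: s => //= x s H; apply: H; exact: mem_head. Qed.

Lemma sorted_pred s : sorted geq s -> sorted geq (map predn s).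
Proof. move=> Hs; apply: (homo_sorted _ _ Hs) => x y /= H; by case: x H; case: y. Qed.

Lemma ups_nth nu i : is_partition nu -> i < size nu ->
  nth 0 nu i = (nth 0 (upsilon nu) i).+1.
Proof.
case/andP=> Hs /allP Ha Hi.
change (upsilon nu) with (filter pos (map predn nu)).
rewrite nth_filter_pos ?sorted_pred // (nth_map 0) //.
have := Ha _ (mem_nth 0 Hi); by case: (nth 0 nu i).
Qed.

Lemma part1 l k : 2 <= l -> 1 <= k ->
  ((forall nu, is_partition nu -> head 0 nu <= l - 1 -> size nu = k ->
      [/\ is_partition (upsilon nu), head 0 (upsilon nu) <= l - 2
        & size (upsilon nu) <= k]) /\
   (forall nu1 nu2,
      is_partition nu1 -> head 0 nu1 <= l - 1 -> size nu1 = k ->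
      is_partition nu2 -> head 0 nu2 <= l - 1 -> size nu2 = k ->
      upsilon nu1 = upsilon nu2 -> nu1 = nu2) /\
   (forall sigma, is_partition sigma -> head 0 sigma <= l - 2 -> size sigma <= k ->
      exists nu, [/\ is_partition nu, head 0 nu <= l - 1, size nu = k
                   & upsilon nu = sigma])).
Proof.
move=> Hl Hk; split; [|split].
- move=> nu Hp Hh Hsz; have Hs : sorted geq nu by case/andP: Hp.
  change (upsilon nu) with (filter pos (map predn nu)); split.
  + rewrite /is_partition (sorted_filter geq_trans') ?sorted_pred //=.
    exact: filter_all.
  + apply: head_le => x; rewrite mem_filter => /andP[_ /mapP [y Hy ->]].
    have := mem_le_head Hs Hy; lia.
  + by rewrite size_filter (leq_trans (count_size _ _)) // size_map Hsz.
- move=> nu1 nu2 Hp1 _ Hs1 Hp2 _ Hs2 E.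
  apply: (eq_from_nth (x0 := 0)); first by rewrite Hs1 Hs2.
  move=> i Hi; rewrite (ups_nth Hp1 Hi) (ups_nth Hp2) ?E //; lia.
- move=> sigma Hp Hh Hsz; have Hs : sorted geq sigma by case/andP: Hp.
  exists (map succn sigma ++ nseq (k - size sigma) 1); split.
  + rewrite /is_partition all_cat all_map all_nseq /=.
    rewrite orbT andbT; apply/andP; split; last by apply/allP => x.
    rewrite (sorted_pairwise geq_trans') pairwise_cat; apply/and3P; split.
    * apply/allrelP => x y /mapP [z _ ->]; rewrite mem_nseq => /andP[_ /eqP->] //.
    * rewrite pairwise_map -(sorted_pairwise geq_trans') //.
    * by elim: (k - size sigma) => //= n ->; rewrite andbT; apply/allP => x; rewrite mem_nseq => /andP[_ /eqP->].
  + case: sigma Hp Hh Hsz {Hs} => [|x s] _ /= Hh Hsz.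
      by case: k Hk Hsz => //= k _ _; lia.
    lia.
  + by rewrite size_cat size_map size_nseq; lia.
  + change (upsilon _) with (filter pos (map predn (map succn sigma ++ nseq (k - size sigma) 1))).
    rewrite map_cat -map_comp map_id map_nseq /= filter_cat filter_nseq /= cats0.
    by apply/all_filterP; case/andP: Hp.
Qed.

Unset Implicit Arguments.

Theorem mainTheorem10 (l k : nat) : 2 <= l -> 1 <= k ->
  (* Upsilon is a bijection from A = {nu : nu_1 <= l-1, len nu = k}
     onto B = {sigma : sigma_1 <= l-2, len sigma <= k} *)
  ((forall nu, is_partition nu -> head 0 nu <= l - 1 -> size nu = k ->
      [/\ is_partition (upsilon nu), head 0 (upsilon nu) <= l - 2
        & size (upsilon nu) <= k]) /\
   (forall nu1 nu2,
      is_partition nu1 -> head 0 nu1 <= l - 1 -> size nu1 = k ->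
      is_partition nu2 -> head 0 nu2 <= l - 1 -> size nu2 = k ->
      upsilon nu1 = upsilon nu2 -> nu1 = nu2) /\
   (forall sigma, is_partition sigma -> head 0 sigma <= l - 2 -> size sigma <= k ->
      exists nu, [/\ is_partition nu, head 0 nu <= l - 1, size nu = k
                   & upsilon nu = sigma])) /\
  (forall lam, is_core l lam -> size lam = k ->
     rho (l - 1) (phi_tilde l lam) = upsilon (rho l lam)).
Proof.
move=> Hl Hk; split; first exact: part1.
by move=> lam Hc _; apply: part2.
Qed.
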